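(* Let $k$ be an odd positive integer. Then $\Bbbk_{-1}[u,v]^{G_{2,k}}\cong\Bbbk[u,v]^{\frac1{4k}(1,2k+1)}$; in particular it is a commutative cyclic quotient singularity.
   Context: $\Bbbk$ is algebraically closed of characteristic $0$; $\Bbbk_{-1}[u,v]=\Bbbk\langle u,v\rangle/(vu+uv)$; matrices $\begin{pmatrix}a&b\\c&d\end{pmatrix}$ act by $u\mapsto au+cv$, $v\mapsto bu+dv$. $G_{n,k}$ is generated by $\mathrm{diag}(\omega^{2k},\omega^{-2k})$ and $\begin{pmatrix}0&\omega^n\\\omega^n&0\end{pmatrix}$ for $\omega$ a primitive $(2nk)$th root of unity. $\frac1m(1,b)$ is the cyclic group generated by $\mathrm{diag}(\omega_m,\omega_m^b)$ acting on the commutative polynomial ring $\Bbbk[u,v]$. *)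

(* Defs.v *)
From HB Require Import structures.
From mathcomp Require Import all_boot all_order all_algebra all_field.
Set Implicit Arguments. Unset Strict Implicit. Unset Printing Implicit Defensive.
Import Order.TTheory GRing.Theory Num.Theory.
Local Open Scope ring_scope.

(* Two-variable polynomials are represented as {poly {poly K}}:
   the coefficient of u^i v^j in p is p`_i`_j; u is the outer variable 'X,
   v is the inner variable ('X)%:P.  For the commutative ring k[u,v] this is
   the usual ring structure.  For the skew ring k_{-1}[u,v] we use the same
   underlying vector space (normal-form basis u^i v^j) with the skew product
   (u^a v^b)(u^c v^d) = (-1)^(b c) u^(a+c) v^(b+d), which is exactly the
   multiplication of k<u,v>/(vu+uv) in the PBW basis. *)

Section TwoVar.
Variable K : fieldType.

Definition bpoly := {poly {poly K}}.

Definition var_u : bpoly := 'X.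
Definition var_v : bpoly := ('X)%:P.

Definition mono (i j : nat) : bpoly := ('X^j)%:P * 'X^i.

Definition kscale (c : K) (p : bpoly) : bpoly := c%:P%:P * p.

Definition smul (p q : bpoly) : bpoly :=
  \sum_(i < size p) \sum_(j < size p`_i) \sum_(k < size q) \sum_(l < size q`_k)
    kscale (p`_i`_j * q`_k`_l * (-1) ^+ (j * k)) (mono (i + k) (j + l)).

Definition spow (p : bpoly) (n : nat) : bpoly := iter n (smul p) 1.

Definition mx2 (a b c d : K) : 'M[K]_2 :=
  \matrix_(i < 2, j < 2)
    if (i : nat) == 0%N then (if (j : nat) == 0%N then a else b)
    else (if (j : nat) == 0%N then c else d).

Definition linf (a c : K) : bpoly := kscale a var_u + kscale c var_v.

Definition sact (M : 'M[K]_2) (p : bpoly) : bpoly :=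
  \sum_(i < size p) \sum_(j < size p`_i)
    kscale p`_i`_j (smul (spow (linf (M 0 0) (M 1 0)) i)
                         (spow (linf (M 0 1) (M 1 1)) j)).

Definition cact (M : 'M[K]_2) (p : bpoly) : bpoly :=
  \sum_(i < size p) \sum_(j < size p`_i)
    kscale p`_i`_j ((linf (M 0 0) (M 1 0)) ^+ i * (linf (M 0 1) (M 1 1)) ^+ j).

(* the (finite) group generated by a list of finite-order matrices
   = the monoid they generate *)
Inductive in_gen (gs : seq 'M[K]_2) : 'M[K]_2 -> Prop :=
| in_gen1 : in_gen gs 1%:M
| in_genM : forall M g, in_gen gs M -> g \in gs -> in_gen gs (M *m g).

Definition G_nk (n k : nat) (w : K) : seq 'M[K]_2 :=
  [:: mx2 (w ^+ (2 * k)) 0 0 (w ^- (2 * k)); mx2 0 (w ^+ n) (w ^+ n) 0].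

Definition cyc_gen (m b : nat) (w : K) : seq 'M[K]_2 :=
  [:: mx2 w 0 0 (w ^+ b)].

Definition skew_invariant (gs : seq 'M[K]_2) (p : bpoly) : Prop :=
  forall M, in_gen gs M -> sact M p = p.

Definition comm_invariant (gs : seq 'M[K]_2) (p : bpoly) : Prop :=
  forall M, in_gen gs M -> cact M p = p.

Definition alg_iso_skew_comm (A B : bpoly -> Prop) : Prop :=
  exists f : bpoly -> bpoly,
    [/\ forall p, A p -> B (f p),
        forall q, B q -> exists2 p, A p & f p = q,
        forall p q, A p -> A q -> f p = f q -> p = q,
        f 1 = 1 &
        forall p q c, A p -> A q ->
          [/\ f (p + q) = f p + f q, f (smul p q) = f p * f q
            & f (kscale c p) = kscale c (f p)]].

End TwoVar.

(* Main.v *)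
Require Import Defs.
From HB Require Import structures.
From mathcomp Require Import all_boot all_order all_algebra all_field.
Import GRing.Theory.
Local Open Scope ring_scope.
From mathcomp Require Import zify ring.

Set Implicit Arguments. Unset Strict Implicit. Unset Printing Implicit Defensive.


Section Basics.
Variable K : fieldType.
Notation bp := (bpoly K).

Lemma coef_kscale (c : K) (p : bp) i j : (kscale c p)`_i`_j = c * p`_i`_j.
Proof. by rewrite /kscale !coefCM. Qed.

Lemma coef_mono a b i j : (mono K a b)`_i`_j = ((i == a) && (j == b))%:R.
Proof.
rewrite /mono coefCM coefXn; case: (i == a) => /=.
  by rewrite mulr1 coefXn.
by rewrite mulr0 coef0.
Qed.

Lemma kscale0 (p : bp) : kscale 0 p = 0.
Proof. by rewrite /kscale !polyC0 mul0r. Qed.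

Lemma kscaleA (a b : K) (p : bp) : kscale a (kscale b p) = kscale (a * b) p.
Proof. by rewrite /kscale mulrA !polyCM. Qed.

Lemma kscaleMM (a b : K) (p q : bp) : kscale a p * kscale b q = kscale (a * b) (p * q).
Proof. by rewrite /kscale !polyCM mulrACA. Qed.

Lemma monoM a b c d : mono K a b * mono K c d = mono K (a + c) (b + d).
Proof. by rewrite /mono mulrACA -polyCM -!exprD. Qed.

Lemma sum_delta (V : zmodType) N a (F : nat -> V) : (a < N)%N ->
  \sum_(i < N) (if (i : nat) == a then F i else 0) = F a.
Proof.
move=> aN; rewrite (bigD1 (Ordinal aN)) //= eqxx big1 ?addr0 // => i.
by rewrite -val_eqE /= => /negbTE ->.
Qed.

Lemma sum_widen (V : zmodType) n N (F : nat -> V) : (n <= N)%N ->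
  (forall i, (n <= i < N)%N -> F i = 0) ->
  \sum_(i < n) F i = \sum_(i < N) F i.
Proof.
move=> nN H; rewrite -!(big_mkord xpredT) (big_cat_nat (leq0n n) nN) /=.
rewrite [X in _ = _ + X]big1_seq ?addr0 // => i /andP[_]; rewrite mem_index_iota.
exact: H.
Qed.

Definition bnd N (p : bp) := leq (size p) N /\ forall i : nat, leq (size p`_i) N.

Lemma bnd_exists (p : bp) : exists N, bnd N p.
Proof.
exists (size p + \sum_(i < size p) size (p`_i)%R)%N; split; first exact: leq_addr.
move=> i; case: (ltnP i (size p)) => hi.
  apply: leq_trans (leq_addl _ _).
  by rewrite (bigD1 (Ordinal hi)) //= leq_addr.
by rewrite nth_default // size_poly0.
Qed.

Lemma bnd_mono N M p : (N <= M)%N -> bnd N p -> bnd M p.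
Proof. by move=> NM [h1 h2]; split => [|i]; [exact: leq_trans NM|exact: leq_trans (h2 i) NM]. Qed.

Lemma bnd_coef N p i j : bnd N p -> (N <= i)%N || (N <= j)%N -> p`_i`_j = 0.
Proof.
case=> h1 h2 /orP[hi|hj].
  by rewrite (nth_default _ (leq_trans h1 hi)) coef0.
exact: nth_default (leq_trans (h2 i) hj).
Qed.

Lemma dsum_widen (V : zmodType) N (p : bp) (h : nat -> nat -> K -> V) :
  bnd N p -> (forall i j, h i j 0 = 0) ->
  \sum_(i < size p) \sum_(j < size p`_i) h i j p`_i`_j =
  \sum_(i < N) \sum_(j < N) h i j p`_i`_j.
Proof.
move=> [h1 h2] h0.
rewrite (@sum_widen _ _ _ (fun i => \sum_(j < size p`_i) h i j p`_i`_j) h1); last first.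
  move=> i /andP[hi _]; rewrite (nth_default _ hi) size_poly0 big_ord0 //.
apply: eq_bigr => i _.
rewrite (@sum_widen _ _ _ (fun j => h i j p`_i`_j) (h2 i)) // => j /andP[hj _].
by rewrite nth_default // h0.
Qed.

Definition box N (c : nat -> nat -> K) : bp :=
  \sum_(i < N) \sum_(j < N) kscale (c i j) (mono K i j).

Lemma coef_box N c a b : (box N c)`_a`_b = if (a < N)%N && (b < N)%N then c a b else 0.
Proof.
rewrite /box coef_sum.
under eq_bigr => i _ do rewrite coef_sum.
rewrite coef_sum.
under eq_bigr => i _ do (rewrite coef_sum; under eq_bigr => j _ do
  rewrite coef_kscale coef_mono).
case: (ltnP a N) => ha /=.
  rewrite (bigD1 (Ordinal ha)) //= [X in _ + X]big1; last first.
    move=> i; rewrite -val_eqE /= => ne; apply: big1 => j _.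
    by rewrite eq_sym (negbTE ne) /= mulr0.
  rewrite addr0; case: (ltnP b N) => hb.
    rewrite (bigD1 (Ordinal hb)) //= !eqxx mulr1 big1 ?addr0 // => j.
    by rewrite -val_eqE /= eq_sym => /negbTE ->; rewrite mulr0.
  apply: big1 => j _; case: (b =P j) => [ej|]; last by rewrite andbF mulr0.
  by move: (ltn_ord j); rewrite -ej ltnNge hb.
apply: big1 => i _; apply: big1 => j _; case: (a =P i) => [ei|]; last by rewrite mulr0.
by move: (ltn_ord i); rewrite -ei ltnNge ha.
Qed.

Lemma box_expand N p : bnd N p -> p = box N (fun i j => p`_i`_j).
Proof.
move=> hb; apply/polyP => a; apply/polyP => b; rewrite coef_box.
case: ifP => // /negbT; rewrite negb_and -!leqNgt => h.
exact: bnd_coef hb h.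
Qed.


Lemma smul_box N (p q : bp) : bnd N p -> bnd N q ->
  smul p q = \sum_(i < N) \sum_(j < N) \sum_(k < N) \sum_(l < N)
    kscale (p`_i`_j * q`_k`_l * (-1) ^+ (j * k)) (mono K (i + k) (j + l)).
Proof.
move=> hp hq; rewrite /smul.
rewrite (@dsum_widen _ N p (fun i j c => \sum_(k < size q) \sum_(l < size q`_k)
    kscale (c * q`_k`_l * (-1) ^+ (j * k)) (mono K (i + k) (j + l)))) //; last first.
  by move=> i j; apply: big1 => k _; apply: big1 => l _; rewrite !mul0r kscale0.
apply: eq_bigr => i _; apply: eq_bigr => j _.
rewrite (@dsum_widen _ N q (fun k l c =>
    kscale (p`_i`_j * c * (-1) ^+ (j * k)) (mono K (i + k) (j + l)))) //.
by move=> k l; rewrite mulr0 mul0r kscale0.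
Qed.

Lemma bnd_coefP N (p : bp) :
  (forall i j, p`_i`_j != 0 -> (i < N)%N && (j < N)%N) -> bnd N p.
Proof.
move=> H; split.
  apply/leq_sizeP => i hi; apply/polyP => j; rewrite coef0.
  apply/eqP; apply: contraT => /H /andP[h _]; by rewrite ltnNge hi in h.
move=> i; apply/leq_sizeP => j hj; apply/eqP; apply: contraT => /H /andP[_ h].
by rewrite ltnNge hj in h.
Qed.

Lemma bnd_kmono (c : K) a b N : (a < N)%N -> (b < N)%N -> bnd N (kscale c (mono K a b)).
Proof.
move=> ha hb; apply: bnd_coefP => i j; rewrite coef_kscale coef_mono.
case: (i =P a) => [->|_]; case: (j =P b) => [->|_] //=;
  by rewrite ?ha ?hb // ?mulr0 ?eqxx.
Qed.

Lemma sum_only (V : zmodType) N a (F : 'I_N -> V) (aN : (a < N)%N) :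
  (forall i : 'I_N, (i : nat) != a -> F i = 0) -> \sum_(i < N) F i = F (Ordinal aN).
Proof.
move=> H; rewrite (bigD1 (Ordinal aN)) //= big1 ?addr0 //.
Qed.

Lemma coef_kmono (x : K) a b i j :
  (kscale x (mono K a b))`_i`_j = if (i == a) && (j == b) then x else 0.
Proof. by rewrite coef_kscale coef_mono; case: ifP; rewrite ?mulr1 ?mulr0. Qed.

Lemma smul_mono (x y : K) a b c d :
  smul (kscale x (mono K a b)) (kscale y (mono K c d)) =
  kscale (x * y * (-1) ^+ (b * c)) (mono K (a + c) (b + d)).
Proof.
set N := (a + b + c + d).+1.
have ha : (a < N)%N by rewrite /N; lia.
have hb : (b < N)%N by rewrite /N; lia.
have hc : (c < N)%N by rewrite /N; lia.
have hd : (d < N)%N by rewrite /N; lia.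
rewrite (smul_box (bnd_kmono _ ha hb) (bnd_kmono _ hc hd)).
rewrite (@sum_only _ _ a _ ha) /=; last first.
  move=> i /negbTE hi; apply: big1 => j _; apply: big1 => k _; apply: big1 => l _.
  by rewrite coef_kmono hi /= !mul0r kscale0.
rewrite (@sum_only _ _ b _ hb) /=; last first.
  move=> j /negbTE hj; apply: big1 => k _; apply: big1 => l _.
  by rewrite coef_kmono hj eqxx /= !mul0r kscale0.
rewrite (@sum_only _ _ c _ hc) /=; last first.
  move=> k /negbTE hk; apply: big1 => l _.
  by rewrite [X in _ * X * _]coef_kmono hk /= mulr0 mul0r kscale0.
rewrite (@sum_only _ _ d _ hd) /=; last first.
  by move=> l /negbTE hl; rewrite [X in _ * X * _]coef_kmono hl andbF mulr0 mul0r kscale0.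
by rewrite !coef_kmono !eqxx.
Qed.

Lemma mx2E (a b c d : K) : let M := mx2 a b c d in
  [/\ M 0 0 = a, M 0 1 = b, M 1 0 = c & M 1 1 = d].
Proof. by rewrite /mx2 !mxE. Qed.

Lemma linf_u (a : K) : linf a 0 = kscale a (mono K 1 0).
Proof. by rewrite /linf kscale0 addr0 /mono expr0 mul1r expr1. Qed.

Lemma linf_v (c : K) : linf 0 c = kscale c (mono K 0 1).
Proof. by rewrite /linf kscale0 add0r /mono expr0 mulr1 expr1. Qed.

Lemma kmono00 : kscale 1 (mono K 0 0) = 1.
Proof. by rewrite /kscale /mono !expr0 !polyC1 !mul1r. Qed.

Lemma spow_u (a : K) n : spow (linf a 0) n = kscale (a ^+ n) (mono K n 0).
Proof.
elim: n => [|n IH]; first by rewrite expr0 kmono00.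
by rewrite /spow iterS -/(spow _ n) IH linf_u smul_mono mul0n expr0 mulr1 -exprS.
Qed.

Lemma spow_v (c : K) n : spow (linf 0 c) n = kscale (c ^+ n) (mono K 0 n).
Proof.
elim: n => [|n IH]; first by rewrite expr0 kmono00.
by rewrite /spow iterS -/(spow _ n) IH linf_v smul_mono mul1n expr0 mulr1 -exprS.
Qed.

Lemma kmono_exp (x : K) a b n : (kscale x (mono K a b)) ^+ n = kscale (x ^+ n) (mono K (a * n) (b * n)).
Proof.
elim: n => [|n IH]; first by rewrite !expr0 !muln0 kmono00.
by rewrite exprS IH kscaleMM monoM -exprS !mulnS.
Qed.

Lemma big_N (p : bp) a b : exists N, [/\ bnd N p, (a < N)%N & (b < N)%N].
Proof.
have [N0 hN0] := bnd_exists p; exists (N0 + a + b).+1; split; try lia.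
apply: bnd_mono hN0; lia.
Qed.

Lemma coef_sact_diag (x y : K) (p : bp) a b :
  (sact (mx2 x 0 0 y) p)`_a`_b = x ^+ a * y ^+ b * p`_a`_b.
Proof.
have [N [hp ha hb]] := big_N p a b.
rewrite /sact; have [-> -> -> ->] := mx2E x 0 0 y.
under eq_bigr => i _ do under eq_bigr => j _ do
  rewrite spow_u spow_v smul_mono kscaleA mul0n expr0 mulr1 addn0 add0n.
rewrite (@dsum_widen _ N p (fun i j c => kscale (c * (x ^+ i * y ^+ j)) (mono K i j))) //;
  last by move=> i j; rewrite mul0r kscale0.
change ((box N (fun i j => p`_i`_j * (x ^+ i * y ^+ j)))`_a`_b = x ^+ a * y ^+ b * p`_a`_b).
by rewrite coef_box ha hb /= mulrC.
Qed.

Lemma coef_sbox N (c : nat -> nat -> K) a b :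
  (\sum_(i < N) \sum_(j < N) kscale (c i j) (mono K j i))`_a`_b =
  if (a < N)%N && (b < N)%N then c b a else 0.
Proof.
rewrite exchange_big /=.
change ((box N (fun i j => c j i))`_a`_b = if (a < N)%N && (b < N)%N then c b a else 0).
by rewrite coef_box.
Qed.

Lemma coef_sact_anti (x y : K) (p : bp) a b :
  (sact (mx2 0 x y 0) p)`_a`_b = y ^+ b * x ^+ a * (-1) ^+ (a * b) * p`_b`_a.
Proof.
have [N [hp ha hb]] := big_N p a b.
rewrite /sact; have [-> -> -> ->] := mx2E 0 x y 0.
under eq_bigr => i _ do under eq_bigr => j _ do
  rewrite spow_v spow_u smul_mono kscaleA addn0 add0n.
rewrite (@dsum_widen _ N p (fun i j c => kscale (c * (y ^+ i * x ^+ j * (-1) ^+ (i * j)))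
   (mono K j i))) //; last by move=> i j; rewrite mul0r kscale0.
have := coef_sbox N (fun i j => p`_i`_j * (y ^+ i * x ^+ j * (-1) ^+ (i * j))) a b.
move=> /= ->; rewrite ha hb /= mulnC; ring.
Qed.

Lemma coef_cact_diag (x y : K) (p : bp) a b :
  (cact (mx2 x 0 0 y) p)`_a`_b = x ^+ a * y ^+ b * p`_a`_b.
Proof.
have [N [hp ha hb]] := big_N p a b.
rewrite /cact; have [-> -> -> ->] := mx2E x 0 0 y.
under eq_bigr => i _ do under eq_bigr => j _ do
  rewrite linf_u linf_v !kmono_exp kscaleMM monoM kscaleA ?mul1n ?mul0n ?addn0 ?add0n.
rewrite (@dsum_widen _ N p (fun i j c => kscale (c * (x ^+ i * y ^+ j)) (mono K i j))) //;
  last by move=> i j; rewrite mul0r kscale0.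
change ((box N (fun i j => p`_i`_j * (x ^+ i * y ^+ j)))`_a`_b = x ^+ a * y ^+ b * p`_a`_b).
by rewrite coef_box ha hb /= mulrC.
Qed.

Lemma coef_cact_anti (x y : K) (p : bp) a b :
  (cact (mx2 0 x y 0) p)`_a`_b = y ^+ b * x ^+ a * p`_b`_a.
Proof.
have [N [hp ha hb]] := big_N p a b.
rewrite /cact; have [-> -> -> ->] := mx2E 0 x y 0.
under eq_bigr => i _ do under eq_bigr => j _ do
  rewrite linf_u linf_v !kmono_exp kscaleMM monoM kscaleA ?mul1n ?mul0n ?addn0 ?add0n.
rewrite (@dsum_widen _ N p (fun i j c => kscale (c * (y ^+ i * x ^+ j)) (mono K j i))) //;
  last by move=> i j; rewrite mul0r kscale0.
have := coef_sbox N (fun i j => p`_i`_j * (y ^+ i * x ^+ j)) a b.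
move=> /= ->; rewrite ha hb /=; ring.
Qed.

End Basics.



Section Subst.
Variable K : fieldType.
Notation bp := (bpoly K).

Notation cc := ((@polyC {poly K}) \o (@polyC K)).
Lemma cc_comm (b : bp) : commr_rmorph cc b.
Proof. by move=> x; rewrite /GRing.comm mulrC. Qed.
Notation inner b := (horner_morph (cc_comm b)).
Lemma inner_comm (b a : bp) : commr_rmorph (inner b) a.
Proof. by move=> x; rewrite /GRing.comm mulrC. Qed.
Definition S (a b : bp) : bp -> bp := horner_morph (inner_comm b a).
Lemma S_D a b x y : S a b (x + y) = S a b x + S a b y.
Proof. exact: (rmorphD (horner_morph (inner_comm b a))). Qed.
Lemma S_0 a b : S a b 0 = 0.
Proof. exact: (rmorph0 (horner_morph (inner_comm b a))). Qed.
Lemma S_M a b x y : S a b (x * y) = S a b x * S a b y.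
Proof. exact: (rmorphM (horner_morph (inner_comm b a))). Qed.
Lemma S_1 a b : S a b 1 = 1.
Proof. exact: (rmorph1 (horner_morph (inner_comm b a))). Qed.
Lemma S_X a b x n : S a b (x ^+ n) = S a b x ^+ n.
Proof. exact: (rmorphXn (horner_morph (inner_comm b a))). Qed.
Lemma S_sum a b (I : finType) (F : I -> bp) : S a b (\sum_i F i) = \sum_i S a b (F i).
Proof. exact: (big_morph _ (S_D a b) (S_0 a b)). Qed.

Lemma size_map_le (R1 R2 : nzRingType) (f : {additive R1 -> R2}) (p : {poly R1}) :
  (size (map_poly f p) <= size p)%N.
Proof.
apply/leq_sizeP => j hj; rewrite coef_map nth_default //; exact: raddf0.
Qed.

Lemma hm_wide (R1 R2 : nzRingType) (f : {rmorphism R1 -> R2}) u (cfu : commr_rmorph f u)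
   (p : {poly R1}) n : (size p <= n)%N ->
  horner_morph cfu p = \sum_(i < n) f p`_i * u ^+ i.
Proof.
move=> h; rewrite /horner_morph (horner_coef_wide _ (leq_trans (size_map_le f p) h)).
by apply: eq_bigr => i _; rewrite coef_map.
Qed.

Lemma S_expand N (a b q : bp) : bnd N q ->
  S a b q = \sum_(i < N) \sum_(j < N) kscale q`_i`_j (a ^+ i * b ^+ j).
Proof.
case=> h1 h2.
rewrite /S (hm_wide _ h1); apply: eq_bigr => i _.
transitivity (\sum_(j < N) cc q`_i`_j * b ^+ j * a ^+ i).
  by rewrite -mulr_suml; congr (_ * _); exact: hm_wide.
apply: eq_bigr => j _; rewrite /kscale /=; ring.
Qed.

Lemma S_cc a b (c : K) : S a b (c%:P%:P) = c%:P%:P.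
Proof. rewrite /S horner_morphC; exact: (horner_morphC (cc_comm b) c). Qed.

Lemma S_kscale a b (c : K) x : S a b (kscale c x) = kscale c (S a b x).
Proof. by rewrite /kscale S_M S_cc. Qed.

Lemma S_u a b : S a b (var_u K) = a.
Proof. by rewrite /S horner_morphX. Qed.

Lemma S_v a b : S a b (var_v K) = b.
Proof. rewrite /S /var_v horner_morphC; exact: (horner_morphX (cc_comm b)). Qed.

Lemma S_linf a b (c d : K) : S a b (linf c d) = kscale c a + kscale d b.
Proof. by rewrite /linf S_D !S_kscale S_u S_v. Qed.

Lemma S_comp a b c d q : S a b (S c d q) = S (S a b c) (S a b d) q.
Proof.
have [N hN] := bnd_exists q.
rewrite !(S_expand _ _ hN) S_sum; apply: eq_bigr => i _.
rewrite S_sum; apply: eq_bigr => j _.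
by rewrite S_kscale S_M !S_X.
Qed.

Lemma S_id q : S (var_u K) (var_v K) q = q.
Proof.
have [N hN] := bnd_exists q.
rewrite (S_expand _ _ hN) {2}(box_expand hN); apply: eq_bigr => i _; apply: eq_bigr => j _.
by rewrite /var_u /var_v /mono -rmorphXn mulrC.
Qed.

Lemma cact_S M q : cact M q = S (linf (M 0 0) (M 1 0)) (linf (M 0 1) (M 1 1)) q.
Proof.
have [N hN] := bnd_exists q.
rewrite (S_expand _ _ hN) /cact.
rewrite (@dsum_widen _ _ N q (fun i j c => kscale c (linf (M 0 0) (M 1 0) ^+ i *
   linf (M 0 1) (M 1 1) ^+ j))) //.
by move=> i j; rewrite kscale0.
Qed.

End Subst.



Section Phi.
Variable K : fieldType.
Notation bp := (bpoly K).

Definition sg i : K := (-1) ^+ 'C(i, 2).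
Definition phi (p : bp) : bp := \poly_(i < size p) (sg i *: p`_i).

Lemma coef_phi p i j : (phi p)`_i`_j = sg i * p`_i`_j.
Proof.
rewrite /phi coef_poly; case: ltnP => h; first by rewrite coefZ.
by rewrite coef0 (nth_default 0 h) coef0 mulr0.
Qed.

Lemma sgK i : sg i * sg i = 1.
Proof. by rewrite -expr2 sqrr_sign. Qed.

Lemma phiK p : phi (phi p) = p.
Proof. by apply/polyP => i; apply/polyP => j; rewrite !coef_phi mulrA sgK mul1r. Qed.

Lemma phi_D p q : phi (p + q) = phi p + phi q.
Proof. by apply/polyP => i; apply/polyP => j; rewrite !(coef_phi, coefD) mulrDr. Qed.

Lemma phi_0 : phi 0 = 0.
Proof. by apply/polyP => i; apply/polyP => j; rewrite !(coef_phi, coef0) mulr0. Qed.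

Lemma phi_1 : phi 1 = 1.
Proof.
apply/polyP => i; apply/polyP => j; rewrite coef_phi coef1.
by case: eqP => [->|]; rewrite ?coef1 ?coef0 ?mulr0 // /sg bin_small // expr0 mul1r.
Qed.

Lemma phi_kscale c p : phi (kscale c p) = kscale c (phi p).
Proof. by apply/polyP => i; apply/polyP => j; rewrite !(coef_phi, coef_kscale); ring. Qed.

Lemma phi_sum (I : finType) (F : I -> bp) : phi (\sum_i F i) = \sum_i phi (F i).
Proof. exact: (big_morph _ phi_D phi_0). Qed.

Lemma phi_kmono c a b : phi (kscale c (mono K a b)) = kscale (sg a * c) (mono K a b).
Proof.
apply/polyP => i; apply/polyP => j; rewrite coef_phi !coef_kmono.
by case: ifP => [/andP[/eqP -> _]|]; rewrite ?mulr0.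
Qed.

Lemma bin2_add i k : 'C(i + k, 2) = ('C(i, 2) + 'C(k, 2) + i * k)%N.
Proof.
elim: k => [|k IH]; first by rewrite addn0 (bin_small (ltn0Sn 1)) muln0 !addn0.
by rewrite addnS !binS !bin1 IH; lia.
Qed.

Lemma sg_add i k : sg (i + k) = sg i * sg k * (-1) ^+ (i * k).
Proof. by rewrite /sg bin2_add !exprD. Qed.

Definition evensupp (p : bp) := forall i j, p`_i`_j != 0 -> ~~ odd (i + j).

Lemma phi_smul p q : evensupp p -> evensupp q -> phi (smul p q) = phi p * phi q.
Proof.
move=> ep eq.
have [N1 h1] := bnd_exists p; have [N2 h2] := bnd_exists q.
have hp : bnd (N1 + N2) p by apply: bnd_mono h1; lia.
have hq : bnd (N1 + N2) q by apply: bnd_mono h2; lia.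
have hpp : bnd (N1 + N2) (phi p).
  by case: hp => [s1 s2]; apply: bnd_coefP => i j; rewrite coef_phi mulf_eq0 negb_or => /andP[_];
   apply: contraR; rewrite negb_and -!leqNgt => /(bnd_coef (conj s1 s2)) ->.
have hqq : bnd (N1 + N2) (phi q).
  by case: hq => [s1 s2]; apply: bnd_coefP => i j; rewrite coef_phi mulf_eq0 negb_or => /andP[_];
   apply: contraR; rewrite negb_and -!leqNgt => /(bnd_coef (conj s1 s2)) ->.
rewrite (smul_box hp hq) (box_expand hpp) (box_expand hqq) /box.
rewrite phi_sum mulr_suml; apply: eq_bigr => i _.
rewrite phi_sum mulr_suml; apply: eq_bigr => j _.
rewrite mulr_sumr phi_sum; apply: eq_bigr => k _.
rewrite mulr_sumr phi_sum; apply: eq_bigr => l _.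
rewrite phi_kmono kscaleMM monoM !coef_phi; congr kscale.
have [->|pij] := eqVneq p`_i`_j 0; first by rewrite !(mulr0, mul0r).
have [->|qkl] := eqVneq q`_k`_l 0; first by rewrite !(mulr0, mul0r).
have oij := ep _ _ pij; rewrite oddD negb_add in oij.
have e : (-1) ^+ (j * k) = (-1) ^+ (i * k) :> K.
  by rewrite -signr_odd oddM -(eqP oij) -oddM signr_odd.
have ss : (-1) ^+ (i * k) * (-1) ^+ (i * k) = 1 :> K by rewrite -expr2 sqrr_sign.
rewrite sg_add e.
transitivity (sg i * p`_i`_j * (sg k * q`_k`_l) * ((-1) ^+ (i * k) * (-1) ^+ (i * k))).
  ring.
by rewrite ss mulr1.
Qed.

End Phi.



Section Mx.
Variable K : fieldType.

Lemma mx2_mul (a b c d a' b' c' d' : K) :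
  mx2 a b c d *m mx2 a' b' c' d' =
  mx2 (a * a' + b * c') (a * b' + b * d') (c * a' + d * c') (c * b' + d * d').
Proof.
apply/matrixP => i j; rewrite !mxE !big_ord_recl big_ord0 !mxE /=.
by case: i => [[|[|i]] hi] //=; case: j => [[|[|j]] hj] //=; rewrite addr0.
Qed.

Lemma mx2_1 : 1%:M = mx2 1 0 0 (1 : K).
Proof.
apply/matrixP => i j; rewrite !mxE /=.
by case: i => [[|[|i]] hi] //=; case: j => [[|[|j]] hj].
Qed.

End Mx.

Section Main.
Variable K : fieldType.
Notation bp := (bpoly K).
Variable k : nat.
Hypothesis Hk : odd k.
Variables w w' : K.
Hypothesis Hw : (2 * 2 * k)%N.-primitive_root w.
Hypothesis Hw' : (4 * k)%N.-primitive_root w'.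
Hypothesis two : (2 : K) != 0.

Lemma k_gt0 : (0 < k)%N.
Proof. by case: k Hk. Qed.

Lemma half_prim (z : K) : (4 * k)%N.-primitive_root z -> z ^+ (2 * k) = -1.
Proof.
move=> hz; have k0 := k_gt0.
have sq : (z ^+ (2 * k)) ^+ 2 == 1.
  by rewrite -exprM (_ : (2 * k * 2 = 4 * k)%N) ?prim_expr_order //; lia.
have n1 : z ^+ (2 * k) != 1.
  rewrite -(prim_order_dvd hz) (_ : (4 * k = (2 * k) * 2)%N); last by lia.
  apply/negP => /dvdn_leq; rewrite muln_gt0 k0 => /(_ isT); lia.
move: sq; rewrite sqrf_eq1 (negbTE n1) /=; exact: eqP.
Qed.

Lemma w_half : w ^+ (2 * k) = -1.
Proof. by apply: half_prim; rewrite (_ : (4 * k = 2 * 2 * k)%N) //; lia. Qed.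

Lemma w'_half : w' ^+ (2 * k) = -1.
Proof. exact: half_prim. Qed.

Lemma sg2k : sg K (2 * k) = -1.
Proof.
rewrite (_ : (2 * k = k + k)%N); last by lia.
by rewrite sg_add sgK mul1r -(signr_odd K (k * k)) oddM Hk expr1.
Qed.

Lemma sg2km m : sg K (2 * k * m) = (-1) ^+ m.
Proof.
elim: m => [|m IH]; first by rewrite muln0 /sg bin_small // expr0.
rewrite mulnS addnC sg_add IH sg2k -(signr_odd K (2 * k * m * (2 * k))) !oddM /=.
by rewrite expr0 mulr1 exprS mulrC.
Qed.

Lemma sign_id a b m : (a + b = 2 * k * m)%N ->
  sg K a * (-1) ^+ (a * b) = (-1) ^+ m * sg K b.
Proof.
move=> e; rewrite -(sg2km m) -e sg_add.
transitivity (sg K a * (-1) ^+ (a * b) * (sg K b * sg K b)); first by rewrite sgK mulr1.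
ring.
Qed.

Definition condA (p : bp) := forall a b,
  p`_a`_b = (-1) ^+ (a * b) * p`_b`_a /\ (p`_a`_b != 0 -> (2 * k %| a + b)%N).

Definition condR (r : bp) := forall a b, r`_a`_b = w' ^+ (a + b) * r`_b`_a.

Lemma condA_even p : condA p -> evensupp p.
Proof.
move=> h a b /(proj2 (h a b)) /dvdnP[m ->].
by rewrite !oddM /= andbF.
Qed.

Lemma w'_2k m : w' ^+ (2 * k * m) = (-1) ^+ m.
Proof. by rewrite exprM w'_half. Qed.

Lemma condA_R p : condA p -> condR (phi p).
Proof.
move=> h a b; rewrite !coef_phi.
have [e|ne] := eqVneq p`_b`_a 0.
  by rewrite (proj1 (h a b)) e !mulr0.
have /dvdnP[m hm0] := proj2 (h b a) ne.
have hm : (a + b = 2 * k * m)%N by lia.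
rewrite (proj1 (h a b)) hm w'_2k.
by rewrite [LHS]mulrA (sign_id hm) mulrA.
Qed.

Lemma condR_dvd r a b : condR r -> r`_a`_b != 0 -> (2 * k %| a + b)%N.
Proof.
move=> h ne.
have e : r`_a`_b = w' ^+ ((a + b) * 2) * r`_a`_b.
  by rewrite {1}h h addnC mulrA -exprD addnn -mul2n mulnC.
have : w' ^+ ((a + b) * 2) == 1.
  apply/eqP; apply: (mulIf ne); by rewrite mul1r -e.
rewrite -(prim_order_dvd Hw') (_ : (4 * k = 2 * k * 2)%N); last by lia.
by rewrite dvdn_pmul2r.
Qed.

Lemma condR_A r : condR r -> condA (phi r).
Proof.
move=> h a b; rewrite !coef_phi; split; last first.
  by rewrite mulf_eq0 negb_or => /andP[_]; apply: condR_dvd.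
have [e|ne] := eqVneq r`_b`_a 0.
  by rewrite (h a b) e !mulr0.
have /dvdnP[m hm0] := condR_dvd h ne.
have hm : (a + b = 2 * k * m)%N by lia.
have e : (-1) ^+ m = sg K a * (-1) ^+ (a * b) * sg K b :> K.
  by rewrite (sign_id hm) -mulrA sgK mulr1.
rewrite (h a b) hm w'_2k e.
transitivity (sg K a * sg K a * ((-1) ^+ (a * b) * (sg K b * r`_b`_a))); first ring.
by rewrite sgK mul1r.
Qed.


Lemma sign2k : (-1) ^+ (2 * k) = 1 :> K.
Proof. by rewrite -signr_odd oddM. Qed.

Lemma skew_elems M : in_gen (G_nk 2 k w) M ->
  exists mu, mu ^+ (2 * k) = 1 /\ (M = mx2 mu 0 0 mu \/ M = mx2 0 mu mu 0).
Proof.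
elim => [|{}M g _ [mu [hmu hM]] hg].
  by exists 1; split; [rewrite expr1n | left; rewrite mx2_1].
have z2 : (w ^+ 2) ^+ (2 * k) = 1.
  by rewrite -exprM (_ : (2 * (2 * k) = 2 * 2 * k)%N) ?prim_expr_order //; lia.
rewrite /G_nk !in_cons orbF in hg.
case/orP: hg => /eqP ->; rewrite ?w_half ?invrN1; case: hM => ->; rewrite mx2_mul.
- exists (- mu); split; first by rewrite exprNn sign2k hmu mulr1.
  by left; congr mx2; ring.
- exists (- mu); split; first by rewrite exprNn sign2k hmu mulr1.
  by right; congr mx2; ring.
- exists (mu * w ^+ 2); split; first by rewrite exprMn hmu z2 mulr1.
  by right; congr mx2; ring.
- exists (mu * w ^+ 2); split; first by rewrite exprMn hmu z2 mulr1.
  by left; congr mx2; ring.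
Qed.

Lemma comm_elems M : in_gen (cyc_gen (4 * k) (2 * k + 1) w') M ->
  exists s, M = mx2 (w' ^+ s) 0 0 ((w' ^+ (2 * k + 1)) ^+ s).
Proof.
elim => [|{}M g _ [s ->] hg].
  by exists 0%N; rewrite !expr0 mx2_1.
rewrite /cyc_gen mem_seq1 in hg; rewrite (eqP hg) mx2_mul.
exists s.+1; rewrite !exprSr; congr mx2; ring.
Qed.

Lemma neg1_ne1 : (-1 : K) != 1.
Proof.
apply: contraNneq two => e.
by rewrite (_ : 2 = 1 + 1) // -{1}e addNr.
Qed.

Lemma A_condA p : skew_invariant (G_nk 2 k w) p <-> condA p.
Proof.
split => [h | h M /skew_elems [mu [hmu [->|->]]]]; last first.
- apply/polyP => a; apply/polyP => b; rewrite coef_sact_anti.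
  have [/dvdnP[m hm]|nd] := boolP (2 * k %| a + b)%N.
    by rewrite (proj1 (h a b)) -exprD addnC hm mulnC exprM hmu expr1n mul1r.
  have e1 : p`_a`_b = 0 by apply/eqP; apply: contraNT nd => /(proj2 (h a b)).
  have e2 : p`_b`_a = 0 by apply/eqP; apply: contraNT nd => /(proj2 (h b a)); rewrite addnC.
  by rewrite e1 e2 mulr0.
- apply/polyP => a; apply/polyP => b; rewrite coef_sact_diag.
  have [/dvdnP[m hm]|nd] := boolP (2 * k %| a + b)%N.
    by rewrite -exprD hm mulnC exprM hmu expr1n mul1r.
  have e1 : p`_a`_b = 0 by apply/eqP; apply: contraNT nd => /(proj2 (h a b)).
  by rewrite e1 mulr0.
have g1 : sact (mx2 (w ^+ (2 * k)) 0 0 (w ^- (2 * k))) p = p.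
  apply: h; rewrite -(mul1mx (mx2 _ _ _ _)).
  by apply: in_genM; [exact: in_gen1 | rewrite /G_nk in_cons eqxx].
rewrite w_half invrN1 in g1.
have g2 : sact (mx2 0 (w ^+ 2) (w ^+ 2) 0) p = p.
  apply: h; rewrite -(mul1mx (mx2 _ _ _ _)).
  by apply: in_genM; [exact: in_gen1 | rewrite /G_nk !in_cons eqxx orbT].
have c1 a b : (-1) ^+ (a + b) * p`_a`_b = p`_a`_b.
  by rewrite exprD -[RHS](congr1 (fun q : bp => q`_a`_b) g1) coef_sact_diag.
have c2 a b : p`_a`_b = (w ^+ 2) ^+ (a + b) * (-1) ^+ (a * b) * p`_b`_a.
  rewrite -[LHS](congr1 (fun q : bp => q`_a`_b) g2) coef_sact_anti exprD; ring.
have D a b : p`_a`_b != 0 -> (2 * k %| a + b)%N.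
  move=> ne.
  have ev : ~~ odd (a + b).
    apply: contraNN neg1_ne1 => od; apply/eqP; apply: (mulIf ne).
    by rewrite mul1r -[RHS](c1 a b) -(signr_odd K (a + b)) od expr1.
  have kd : (k %| a + b)%N.
    have e : p`_a`_b = (w ^+ 2) ^+ ((a + b) * 2) * p`_a`_b.
      rewrite {1}c2 c2 (addnC b a) (mulnC b a) [in RHS]exprM.
      transitivity ((w ^+ 2) ^+ (a + b) ^+ 2 * ((-1) ^+ (a * b) * (-1) ^+ (a * b)) * p`_a`_b).
        ring.
      by rewrite -expr2 sqrr_sign mulr1.
    have : (w ^+ 2) ^+ ((a + b) * 2) == 1.
      by apply/eqP; apply: (mulIf ne); rewrite mul1r -e.
    rewrite -exprM -(prim_order_dvd Hw) (_ : (2 * 2 * k = k * 4)%N); last by lia.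
    by rewrite (_ : (2 * ((a + b) * 2) = (a + b) * 4)%N) ?dvdn_pmul2r //; lia.
  by rewrite Gauss_dvd ?coprime2n // dvdn2 ev.
move=> a b; split; last exact: D.
have [/dvdnP[m hm]|nd] := boolP (2 * k %| a + b)%N.
  rewrite {1}c2 hm -exprM (_ : (2 * (m * (2 * k)) = (2 * 2 * k) * m)%N); last by lia.
  by rewrite (exprM w (2 * 2 * k) m) (prim_expr_order Hw) expr1n mul1r.
have e1 : p`_a`_b = 0 by apply/eqP; apply: contraNT nd => /D.
have e2 : p`_b`_a = 0 by apply/eqP; apply: contraNT nd => /D; rewrite addnC.
by rewrite e1 e2 mulr0.
Qed.

Definition gB : 'M[K]_2 := mx2 w' 0 0 (w' ^+ (2 * k + 1)).
Definition gJ : 'M[K]_2 := mx2 0 w' w' 0.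

Lemma B_inv q : comm_invariant (cyc_gen (4 * k) (2 * k + 1) w') q <-> cact gB q = q.
Proof.
split => [h | h M /comm_elems [s ->]].
  apply: h; rewrite -(mul1mx gB).
  by apply: in_genM; [exact: in_gen1 | rewrite /cyc_gen mem_seq1].
apply/polyP => a; apply/polyP => b; rewrite coef_cact_diag.
have := congr1 (fun q : bp => q`_a`_b) h; rewrite /= /gB coef_cact_diag => e.
have [z|nz] := eqVneq q`_a`_b 0; first by rewrite z mulr0.
have e1 : w' ^+ a * (w' ^+ (2 * k + 1)) ^+ b = 1 by apply: (mulIf nz); rewrite mul1r.
set v := w' ^+ (2 * k + 1) in e1 *.
have -> : (w' ^+ s) ^+ a * (v ^+ s) ^+ b = (w' ^+ a * v ^+ b) ^+ s.
  by rewrite exprMn -!exprM (mulnC s a) (mulnC s b).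
by rewrite e1 expr1n mul1r.
Qed.

Lemma J_inv r : cact gJ r = r <-> condR r.
Proof.
split => [h a b | h].
  by rewrite -[LHS](congr1 (fun q : bp => q`_a`_b) h) /gJ coef_cact_anti exprD (mulrC (w' ^+ b)).
apply/polyP => a; apply/polyP => b.
by rewrite /gJ coef_cact_anti (h a b) exprD (mulrC (w' ^+ b)).
Qed.


Notation psi := (S (@linf K 1 1) (@linf K 1 (-1))).
Notation Hh := (S (kscale (2^-1) (var_u K)) (kscale (2^-1) (var_v K))).

Lemma c2 : ((2 : K)%:P%:P : bp) = 2.
Proof. by rewrite !polyC_natr. Qed.

Lemma kscale1 (x : bp) : kscale 1 x = x.
Proof. by rewrite /kscale !polyC1 mul1r. Qed.

Lemma psi_psi q : psi (psi q) = S (kscale 2 (var_u K)) (kscale 2 (var_v K)) q.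
Proof.
rewrite S_comp !S_linf; congr S; rewrite /linf /kscale c2 !polyCN !polyC1; ring.
Qed.

Lemma psiH q : psi (psi (Hh q)) = q.
Proof.
rewrite psi_psi S_comp !S_kscale S_u S_v !kscaleA mulVf // !kscale1; exact: S_id.
Qed.

Lemma Hpsi q : Hh (psi (psi q)) = q.
Proof.
rewrite psi_psi S_comp !S_kscale S_u S_v !kscaleA mulfV // !kscale1; exact: S_id.
Qed.

Lemma psi_inj : injective psi.
Proof. by move=> x y e; rewrite -(Hpsi x) -(Hpsi y) e. Qed.

Lemma g_psi r : cact gB (psi r) = psi (cact gJ r).
Proof.
rewrite !cact_S /gB /gJ.
have [-> -> -> ->] := mx2E w' 0 0 (w' ^+ (2 * k + 1)).
have [-> -> -> ->] := mx2E 0 w' w' 0.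
have ew : w' ^+ (2 * k + 1) = - w' by rewrite exprD w'_half expr1 mulN1r.
rewrite !S_comp !S_linf ew; congr S; rewrite /linf /kscale !polyCN !polyC1 !polyC0; ring.
Qed.

Lemma main_iso : alg_iso_skew_comm (skew_invariant (G_nk 2 k w))
    (comm_invariant (cyc_gen (4 * k) (2 * k + 1) w')).
Proof.
exists (fun p => psi (phi p)); split.
- move=> p /A_condA hA; apply/B_inv; rewrite g_psi; congr S; apply/J_inv; exact: condA_R.
- move=> q /B_inv hq; set r := psi (Hh q).
  have qr : psi r = q by rewrite psiH.
  have hr : condR r by apply/J_inv; apply: psi_inj; rewrite -g_psi qr.
  exists (phi r); [apply/A_condA; exact: condR_A | by rewrite phiK].
- by move=> p q _ _ /psi_inj e; rewrite -(phiK p) e phiK.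
- by rewrite phi_1 S_1.
- move=> p q c /A_condA hp /A_condA hq; split.
  + by rewrite phi_D S_D.
  + by rewrite phi_smul ?S_M //; apply: condA_even.
  + by rewrite phi_kscale S_kscale.
Qed.

End Main.


Unset Implicit Arguments.

Theorem mainTheorem16 (K : closedFieldType) (Hchar : [pchar K] =i pred0)
    (k : nat) (Hk : odd k) (w w' : K)
    (Hw : (2 * 2 * k)%N.-primitive_root w)
    (Hw' : (4 * k)%N.-primitive_root w') :
  alg_iso_skew_comm
    (skew_invariant (G_nk 2 k w))
    (comm_invariant (cyc_gen (4 * k) (2 * k + 1) w')).
Proof.
apply: (@main_iso K k Hk w w' Hw Hw').
by rewrite ((pcharf0P K).1 Hchar 2).
Qed.
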